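(* Let $P_{IV}\subset\mathbb{R}^6$ be the polytope of $\alpha=(\alpha_0,\dots,\alpha_5)$ defined by \[ \alpha_4+\alpha_5\ge1,\quad\alpha_r+\alpha_s\ge0\ (1\le r<s\le3),\quad\alpha_0+\alpha_r\ge0\ (r=4,5),\quad\sum_{r=0}^5\alpha_r=1. \] Then the vertices of $P_{IV}$ are the orbits under $S_1\times S_3\times S_2$ (with $S_3$ permuting $(\alpha_1,\alpha_2,\alpha_3)$ and $S_2$ permuting $(\alpha_4,\alpha_5)$) of the points $(0,0,0,0,0,1)$, $(-\frac12,-\frac12,\frac12,\frac12,\frac12,\frac12)$ and $(-1,0,0,0,1,1)$. *)

(* Defs.v *)
From HB Require Import structures.
From mathcomp Require Import all_boot all_order all_algebra all_fingroup.
Set Implicit Arguments. Unset Strict Implicit. Unset Printing Implicit Defensive.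
Import Order.TTheory GRing.Theory Num.Theory.
Local Open Scope ring_scope.

(* Coordinates alpha_0..alpha_5 of a point a : 'rV[R]_6 are a 0 i, i : 'I_6. *)
Definition coord {R : realFieldType} (a : 'rV[R]_6) (k : nat) : R := a 0 (inord k).

Definition P_IV {R : realFieldType} (a : 'rV[R]_6) : Prop :=
  [/\ 1 <= coord a 4 + coord a 5,
      (forall r s : 'I_6, (1 <= r)%N -> (r < s)%N -> (s <= 3)%N -> 0 <= a 0 r + a 0 s),
      0 <= coord a 0 + coord a 4,
      0 <= coord a 0 + coord a 5
    & \sum_(i < 6) a 0 i = 1].

Definition is_vertex {R : realFieldType} (P : 'rV[R]_6 -> Prop) (x : 'rV[R]_6) : Prop :=
  P x /\ forall (y z : 'rV[R]_6) (t : R), P y -> P z -> 0 < t -> t < 1 ->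
           x = t *: y + (1 - t) *: z -> y = z.

(* S_1 x S_3 x S_2 inside S_6: permutations fixing 0, preserving {1,2,3}
   and preserving {4,5}. *)
Definition block_perm (s : 'S_6) : Prop :=
  [/\ nat_of_ord (s (inord 0)) = 0%N,
      (forall i : 'I_6, (1 <= i <= 3)%N -> (1 <= s i <= 3)%N)
    & (forall i : 'I_6, (4 <= i)%N -> (4 <= s i)%N)].

Definition permute {R : realFieldType} (s : 'S_6) (a : 'rV[R]_6) : 'rV[R]_6 :=
  \row_i a 0 (s i).

Definition mkpt {R : realFieldType} (l : seq R) : 'rV[R]_6 := \row_(i < 6) nth 0 l i.

Definition v1 {R : realFieldType} : 'rV[R]_6 := mkpt [:: 0; 0; 0; 0; 0; 1].
Definition v2 {R : realFieldType} : 'rV[R]_6 :=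
  mkpt [:: - 2^-1; - 2^-1; 2^-1; 2^-1; 2^-1; 2^-1].
Definition v3 {R : realFieldType} : 'rV[R]_6 := mkpt [:: -1; 0; 0; 0; 1; 1].

(* Main.v *)
Require Import Defs.
From HB Require Import structures.
From mathcomp Require Import all_boot all_order all_algebra all_fingroup.
From mathcomp Require Import zify lra.
Import Order.TTheory GRing.Theory Num.Theory.
Local Open Scope ring_scope.
Local Notation coord := Defs.coord.

Definition Pc {R : realFieldType} (c : nat -> R) : Prop :=
  1 <= c 4%N + c 5%N /\ 0 <= c 1%N + c 2%N /\ 0 <= c 1%N + c 3%N /\ 0 <= c 2%N + c 3%N
  /\ 0 <= c 0%N + c 4%N /\ 0 <= c 0%N + c 5%N
  /\ c 0%N + c 1%N + c 2%N + c 3%N + c 4%N + c 5%N = 1.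

Definition Ph {R : realFieldType} (c : nat -> R) (m : R) : Prop :=
  m <= c 4%N + c 5%N /\ 0 <= c 1%N + c 2%N /\ 0 <= c 1%N + c 3%N /\ 0 <= c 2%N + c 3%N
  /\ 0 <= c 0%N + c 4%N /\ 0 <= c 0%N + c 5%N
  /\ c 0%N + c 1%N + c 2%N + c 3%N + c 4%N + c 5%N = m.

Lemma sum6 {R : realFieldType} (a : 'rV[R]_6) :
  \sum_(i < 6) a 0 i = coord a 0 + coord a 1 + coord a 2 + coord a 3 + coord a 4 + coord a 5.
Proof.
have -> : \sum_(i<6) a 0 i = \sum_(i<6) coord a i.
  by apply: eq_bigr => i _; rewrite /coord inord_val.
rewrite -(big_mkord xpredT (coord a)) /index_iota /= !big_cons big_nil.
by rewrite addr0 !addrA.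
Qed.

Lemma PE {R : realFieldType} (a : 'rV[R]_6) : P_IV a <-> Pc (coord a).
Proof.
split.
- case=> h45 hp h04 h05 hs.
  have p12 : 0 <= coord a 1 + coord a 2 by apply: hp; rewrite ?inordK.
  have p13 : 0 <= coord a 1 + coord a 3 by apply: hp; rewrite ?inordK.
  have p23 : 0 <= coord a 2 + coord a 3 by apply: hp; rewrite ?inordK.
  rewrite sum6 in hs.
  by do !split.
- case=> [h45 [p12 [p13 [p23 [h04 [h05 hs]]]]]].
  split=> //; last by rewrite sum6.
  move=> [r Hr] [q Hq] /= h1 h2 h3.
  have -> : Ordinal Hr = inord r by apply/val_inj; rewrite /= inordK.
  have -> : Ordinal Hq = inord q by apply/val_inj; rewrite /= inordK.
  change (0 <= coord a r + coord a q).
  have : (r = 1 /\ q = 2 \/ r = 1 /\ q = 3 \/ r = 2 /\ q = 3)%N by lia.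
  by case=> [[-> ->]|[[-> ->]|[-> ->]]].
Qed.

Lemma coordD {R : realFieldType} (a b : 'rV[R]_6) k : coord (a + b) k = coord a k + coord b k.
Proof. by rewrite /coord mxE. Qed.
Lemma coordB {R : realFieldType} (a b : 'rV[R]_6) k : coord (a - b) k = coord a k - coord b k.
Proof. by rewrite /coord !mxE. Qed.
Lemma coordZ {R : realFieldType} t (a : 'rV[R]_6) k : coord (t *: a) k = t * coord a k.
Proof. by rewrite /coord mxE. Qed.
Lemma coord_mkpt {R : realFieldType} (l : seq R) k : (k < 6)%N -> coord (mkpt l) k = nth 0 l k.
Proof. by move=> hk; rewrite /coord mxE inordK. Qed.
Lemma coord_permute {R : realFieldType} s (a : 'rV[R]_6) k :
  coord (permute s a) k = coord a (s (inord k)).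
Proof. by rewrite /coord mxE inord_val. Qed.

Lemma row_eq6 {R : realFieldType} (a b : 'rV[R]_6) :
  coord a 0 = coord b 0 -> coord a 1 = coord b 1 -> coord a 2 = coord b 2 ->
  coord a 3 = coord b 3 -> coord a 4 = coord b 4 -> coord a 5 = coord b 5 -> a = b.
Proof.
move=> e0 e1 e2 e3 e4 e5; apply/rowP => i.
have -> : i = inord i by rewrite inord_val.
case: i => [[|[|[|[|[|[|k]]]]]] Hi] //=.
Qed.

Lemma combo0 {R : realFieldType} (t A B : R) : 0 < t -> t < 1 -> 0 <= A -> 0 <= B ->
  t * A + (1 - t) * B = 0 -> A = 0 /\ B = 0.
Proof.
move=> t0 t1 A0 B0 E.
have hA : 0 <= t * A by apply: mulr_ge0; lra.
have hB : 0 <= (1 - t) * B by apply: mulr_ge0; lra.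
have eA : t * A = 0 by lra.
have eB : (1 - t) * B = 0 by lra.
move/eqP: eA; rewrite mulf_eq0 => /orP[/eqP|/eqP]; first lra.
move=> ->; split=> //.
move/eqP: eB; rewrite mulf_eq0 => /orP[/eqP|/eqP]; lra.
Qed.

Lemma inord_val6 (k : nat) : (k < 6)%N -> nat_of_ord (inord k : 'I_6) = k.
Proof. by move=> h; rewrite inordK. Qed.

Lemma block_permV s : block_perm s -> block_perm (s^-1)%g.
Proof.
case=> h0 h13 h45.
have s0 : s (inord 0) = inord 0 by apply/val_inj; rewrite /= h0 inordK.
split.
- by rewrite -{1}s0 permK inordK.
- move=> i Hi; set j := (s^-1)%g i; have Hsj : s j = i by rewrite /j permKV.
  have [Hj0|Hj0] := eqVneq (nat_of_ord j) 0%N.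
    have Ej : j = inord 0 by apply/val_inj; rewrite /= inordK.
    by move: Hi; rewrite -Hsj Ej h0.
  have [Hj4|Hj4] := leqP 4 j; last by lia.
  have := h45 j Hj4; rewrite Hsj; lia.
- move=> i Hi; set j := (s^-1)%g i; have Hsj : s j = i by rewrite /j permKV.
  have [Hj0|Hj0] := eqVneq (nat_of_ord j) 0%N.
    have Ej : j = inord 0 by apply/val_inj; rewrite /= inordK.
    by move: Hi; rewrite -Hsj Ej h0.
  have [Hj4|Hj4] := leqP 4 j => //.
  have := h13 j; rewrite Hsj; lia.
Qed.

Lemma permuteP {R : realFieldType} s (a : 'rV[R]_6) :
  block_perm s -> P_IV a -> P_IV (permute s a).
Proof.
case=> h0 h13 h45 [H45 Hp H04 H05 Hs].
have s0 : s (inord 0) = inord 0 by apply/val_inj; rewrite /= h0 inordK.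
have v4 := h45 (inord 4) ltac:(by rewrite inordK).
have v5 := h45 (inord 5) ltac:(by rewrite inordK).
have d45 : nat_of_ord (s (inord 4)) != s (inord 5).
  by apply/eqP => /val_inj /perm_inj /(congr1 val); rewrite /= !inordK.
have b4 := ltn_ord (s (inord 4)); have b5 := ltn_ord (s (inord 5)).
have c0 : coord (permute s a) 0 = coord a 0 by rewrite coord_permute s0 inordK.
have : (coord (permute s a) 4 = coord a 4 /\ coord (permute s a) 5 = coord a 5) \/
       (coord (permute s a) 4 = coord a 5 /\ coord (permute s a) 5 = coord a 4).
  rewrite !coord_permute.
  have : (nat_of_ord (s (inord 4)) = 4 /\ nat_of_ord (s (inord 5)) = 5 \/
          nat_of_ord (s (inord 4)) = 5 /\ nat_of_ord (s (inord 5)) = 4)%N by lia.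
  by case=> [[-> ->]|[-> ->]]; [left|right].
move=> e45.
split.
- by case: e45 => [[-> ->]|[-> ->]] //; rewrite addrC.
- move=> r q h1 h2 h3; rewrite !mxE.
  have := h13 r; have := h13 q.
  have dq : nat_of_ord (s r) != s q.
    rewrite (inj_eq val_inj) (inj_eq perm_inj); apply/eqP => E; move: h2; rewrite E; lia.
  move=> hq hr.
  case: (ltngtP (s r) (s q)) => E.
  + apply: Hp => //; lia.
  + rewrite addrC; apply: Hp => //; lia.
  + by rewrite E eqxx in dq.
- by rewrite c0; case: e45 => [[-> _]|[-> _]].
- by rewrite c0; case: e45 => [[_ ->]|[_ ->]].
- rewrite -Hs; transitivity (\sum_(i<6) a 0 (s i)).
    by apply: eq_bigr => i _; rewrite mxE.
  by rewrite [RHS](reindex_inj (@perm_inj _ s)).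
Qed.

Lemma permuteK {R : realFieldType} s (a : 'rV[R]_6) : permute (s^-1)%g (permute s a) = a.
Proof. by apply/rowP => i; rewrite !mxE permKV. Qed.
Lemma permuteKV {R : realFieldType} s (a : 'rV[R]_6) : permute s (permute (s^-1)%g a) = a.
Proof. by apply/rowP => i; rewrite !mxE permK. Qed.
Lemma permute_lin {R : realFieldType} s (t u : R) (a b : 'rV[R]_6) :
  permute s (t *: a + u *: b) = t *: permute s a + u *: permute s b.
Proof. by apply/rowP => i; rewrite !mxE. Qed.

Lemma vertex_perm {R : realFieldType} s (x : 'rV[R]_6) :
  block_perm s -> is_vertex P_IV x -> is_vertex P_IV (permute s x).
Proof.
move=> bs [Px Hx]; split; first by apply: permuteP.
move=> y z t Py Pz t0 t1 E.
have bsV := block_permV _ bs.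
have E' : x = t *: permute (s^-1)%g y + (1 - t) *: permute (s^-1)%g z.
  by rewrite -permute_lin -E permuteK.
have := Hx _ _ _ (permuteP _ _ bsV Py) (permuteP _ _ bsV Pz) t0 t1 E'.
by move=> /(congr1 (permute s)); rewrite !permuteKV.
Qed.

Arguments combo0 {R t A B}.

Lemma vertex_v1 {R : realFieldType} : is_vertex P_IV (v1 : 'rV[R]_6).
Proof.
split; first by apply/PE; rewrite /Pc /v1 !coord_mkpt //=; lra.
move=> y z t /PE Py /PE Pz t0 t1 E.
have C k : (k < 6)%N -> nth 0 [:: 0; 0; 0; 0; 0; 1] k = t * coord y k + (1-t) * coord z k.
  by move=> hk; rewrite -coord_mkpt // -/v1 E coordD !coordZ.
have c0 := C 0%N erefl; have c1 := C 1%N erefl; have c2 := C 2%N erefl.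
have c3 := C 3%N erefl; have c4 := C 4%N erefl; have c5 := C 5%N erefl.
rewrite /= in c0 c1 c2 c3 c4 c5.
case: Py => [y45 [y12 [y13 [y23 [y04 [y05 ys]]]]]].
case: Pz => [z45 [z12 [z13 [z23 [z04 [z05 zs]]]]]].
have [a1 b1] := combo0 t0 t1 y12 z12 ltac:(lra).
have [a2 b2] := combo0 t0 t1 y13 z13 ltac:(lra).
have [a3 b3] := combo0 t0 t1 y23 z23 ltac:(lra).
have [a4 b4] := combo0 t0 t1 y04 z04 ltac:(lra).
have yy : 0 <= coord y 4 + coord y 5 - 1 by lra.
have zz : 0 <= coord z 4 + coord z 5 - 1 by lra.
have [a5 b5] := combo0 t0 t1 yy zz ltac:(lra).
apply: row_eq6; lra.
Qed.

Lemma vertex_v2 {R : realFieldType} : is_vertex P_IV (v2 : 'rV[R]_6).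
Proof.
split; first by apply/PE; rewrite /Pc /v2 !coord_mkpt //=; lra.
move=> y z t /PE Py /PE Pz t0 t1 E.
have C k : (k < 6)%N -> nth 0 [:: - 2^-1; - 2^-1; 2^-1; 2^-1; 2^-1; 2^-1] k
     = t * coord y k + (1-t) * coord z k.
  by move=> hk; rewrite -coord_mkpt // -/v2 E coordD !coordZ.
have c0 := C 0%N erefl; have c1 := C 1%N erefl; have c2 := C 2%N erefl.
have c3 := C 3%N erefl; have c4 := C 4%N erefl; have c5 := C 5%N erefl.
rewrite /= in c0 c1 c2 c3 c4 c5.
case: Py => [y45 [y12 [y13 [y23 [y04 [y05 ys]]]]]].
case: Pz => [z45 [z12 [z13 [z23 [z04 [z05 zs]]]]]].
have [a1 b1] := combo0 t0 t1 y12 z12 ltac:(lra).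
have [a2 b2] := combo0 t0 t1 y13 z13 ltac:(lra).
have [a3 b3] := combo0 t0 t1 y05 z05 ltac:(lra).
have [a4 b4] := combo0 t0 t1 y04 z04 ltac:(lra).
have yy : 0 <= coord y 4 + coord y 5 - 1 by lra.
have zz : 0 <= coord z 4 + coord z 5 - 1 by lra.
have [a5 b5] := combo0 t0 t1 yy zz ltac:(lra).
apply: row_eq6; lra.
Qed.

Lemma vertex_v3 {R : realFieldType} : is_vertex P_IV (v3 : 'rV[R]_6).
Proof.
split; first by apply/PE; rewrite /Pc /v3 !coord_mkpt //=; lra.
move=> y z t /PE Py /PE Pz t0 t1 E.
have C k : (k < 6)%N -> nth 0 [:: -1; 0; 0; 0; 1; 1] k = t * coord y k + (1-t) * coord z k.
  by move=> hk; rewrite -coord_mkpt // -/v3 E coordD !coordZ.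
have c0 := C 0%N erefl; have c1 := C 1%N erefl; have c2 := C 2%N erefl.
have c3 := C 3%N erefl; have c4 := C 4%N erefl; have c5 := C 5%N erefl.
rewrite /= in c0 c1 c2 c3 c4 c5.
case: Py => [y45 [y12 [y13 [y23 [y04 [y05 ys]]]]]].
case: Pz => [z45 [z12 [z13 [z23 [z04 [z05 zs]]]]]].
have [a1 b1] := combo0 t0 t1 y12 z12 ltac:(lra).
have [a2 b2] := combo0 t0 t1 y13 z13 ltac:(lra).
have [a3 b3] := combo0 t0 t1 y23 z23 ltac:(lra).
have [a4 b4] := combo0 t0 t1 y04 z04 ltac:(lra).
have [a5 b5] := combo0 t0 t1 y05 z05 ltac:(lra).
apply: row_eq6; lra.
Qed.

Lemma Ph_scale {R : realFieldType} (a : 'rV[R]_6) (m : R) :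
  0 < m -> Ph (coord a) m -> Pc (coord (m^-1 *: a)).
Proof.
move=> m0 [h45 [h12 [h13 [h23 [h04 [h05 hs]]]]]].
have mi : 0 <= m^-1 by rewrite invr_ge0 ltW.
rewrite /Pc !coordZ -!mulrDr.
split; first by rewrite ler_pdivlMl // mulr1.
do 5 (split; first exact: mulr_ge0).
by rewrite hs mulVf // gt_eqF.
Qed.

Lemma extract {R : realFieldType} (x w : 'rV[R]_6) (lam : R) :
  is_vertex P_IV x -> P_IV w -> 0 < lam -> lam <= 1 ->
  Ph (coord (x - lam *: w)) (1 - lam) -> x = w.
Proof.
move=> [Px Hx] Pw l0 l1 Hp.
have [e1|ne1] := eqVneq lam 1.
  rewrite e1 /Ph !coordB !coordZ !mul1r subrr in Hp.
  case: Hp => [h45 [h12 [h13 [h23 [h04 [h05 hs]]]]]].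
  apply: row_eq6; lra.
have lt1 : lam < 1 by rewrite lt_neqAle ne1.
have m0 : 0 < 1 - lam by lra.
set z := (1 - lam)^-1 *: (x - lam *: w).
have Pz : P_IV z by apply/PE; exact: Ph_scale.
have E : x = lam *: w + (1 - lam) *: z.
  rewrite /z scalerA mulfV ?gt_eqF // scale1r.
  by rewrite addrC subrK.
have wz := Hx w z lam Pw Pz l0 lt1 E.
by rewrite E -wz -scalerDl addrC subrK scale1r.
Qed.

Arguments extract {R x w lam}.

Lemma tpermv (a b k : nat) : (a < 6)%N -> (b < 6)%N -> (k < 6)%N ->
  nat_of_ord (tperm (inord a) (inord b) (inord k) : 'I_6) =
  if k == a then b else if k == b then a else k.
Proof.
move=> ha hb hk.
have [->|nka] := eqVneq k a; first by rewrite tpermL inordK.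
have [->|nkb] := eqVneq k b; first by rewrite tpermR inordK.
rewrite tpermD ?inordK //; by rewrite -(inj_eq val_inj) /= !inordK // eq_sym.
Qed.

Lemma block_tperm (a b : nat) : (1 <= a <= 3 /\ 1 <= b <= 3 \/ 4 <= a < 6 /\ 4 <= b < 6)%N ->
  block_perm (tperm (inord a) (inord b) : 'S_6).
Proof.
move=> hab; have ha : (a < 6)%N by lia. have hb : (b < 6)%N by lia.
split.
- rewrite tpermv //; repeat (case: eqP => ?); lia.
- move=> i hi; have := ltn_ord i => hi6.
  rewrite -[i in tperm _ _ i]inord_val tpermv //; repeat (case: eqP => ?); lia.
- move=> i hi; have := ltn_ord i => hi6.
  rewrite -[i in tperm _ _ i]inord_val tpermv //; repeat (case: eqP => ?); lia.
Qed.

Lemma block_perm1 : block_perm (1%g : 'S_6).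
Proof. by split=> [|i|i]; rewrite perm1 ?inordK. Qed.

Lemma permute1 {R : realFieldType} (a : 'rV[R]_6) : permute 1%g a = a.
Proof. by apply/rowP => i; rewrite !mxE perm1. Qed.

Lemma w2E {R : realFieldType} : permute (tperm (inord 1) (inord 2)) (v2 : 'rV[R]_6) =
  mkpt [:: - 2^-1; 2^-1; - 2^-1; 2^-1; 2^-1; 2^-1].
Proof. by apply: row_eq6; rewrite coord_permute tpermv //= !coord_mkpt. Qed.
Lemma w3E {R : realFieldType} : permute (tperm (inord 1) (inord 3)) (v2 : 'rV[R]_6) =
  mkpt [:: - 2^-1; 2^-1; 2^-1; - 2^-1; 2^-1; 2^-1].
Proof. by apply: row_eq6; rewrite coord_permute tpermv //= !coord_mkpt. Qed.
Lemma w5E {R : realFieldType} : permute (tperm (inord 4) (inord 5)) (v1 : 'rV[R]_6) =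
  mkpt [:: 0; 0; 0; 0; 1; 0].
Proof. by apply: row_eq6; rewrite coord_permute tpermv //= !coord_mkpt. Qed.

Theorem lemmaA7 (R : realFieldType) (x : 'rV[R]_6) :
  is_vertex P_IV x <->
  exists s : 'S_6, block_perm s /\
    (x = permute s v1 \/ x = permute s v2 \/ x = permute s v3).
Proof.
split; last first.
  case=> s [bs [->|[->|->]]]; apply: vertex_perm => //.
  - exact: vertex_v1.
  - exact: vertex_v2.
  - exact: vertex_v3.
move=> Vx; have [Px _] := Vx.
move/PE: (Px) => [h45 [h12 [h13 [h23 [h04 [h05 hs]]]]]].
have [L|L] := ltrP 0 (coord x 2 + coord x 3).
  exists 1%g; split; first exact: block_perm1.
  right; left; rewrite permute1.
  apply: (extract Vx (proj1 vertex_v2) L); first lra.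
  rewrite /Ph !coordB !coordZ /v2 !coord_mkpt //=; lra.
have [L2|L2] := ltrP 0 (coord x 1 + coord x 3).
  exists (tperm (inord 1) (inord 2)); split; first by apply: block_tperm; lia.
  right; left; rewrite w2E.
  have Pw : P_IV (mkpt [:: - 2^-1; 2^-1; - 2^-1; 2^-1; 2^-1; (2^-1 : R)]).
    by rewrite -w2E; apply: permuteP; [apply: block_tperm; lia | exact: (proj1 vertex_v2)].
  apply: (extract Vx Pw L2); first lra.
  rewrite /Ph !coordB !coordZ !coord_mkpt //=; lra.
have [L3|L3] := ltrP 0 (coord x 1 + coord x 2).
  exists (tperm (inord 1) (inord 3)); split; first by apply: block_tperm; lia.
  right; left; rewrite w3E.
  have Pw : P_IV (mkpt [:: - 2^-1; 2^-1; 2^-1; - 2^-1; 2^-1; (2^-1 : R)]).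
    by rewrite -w3E; apply: permuteP; [apply: block_tperm; lia | exact: (proj1 vertex_v2)].
  apply: (extract Vx Pw L3); first lra.
  rewrite /Ph !coordB !coordZ !coord_mkpt //=; lra.
have [L4|L4] := ltrP 0 (coord x 0 + coord x 5).
  exists 1%g; split; first exact: block_perm1.
  left; rewrite permute1.
  apply: (extract Vx (proj1 vertex_v1) L4); first lra.
  rewrite /Ph !coordB !coordZ /v1 !coord_mkpt //=; lra.
have [L5|L5] := ltrP 0 (coord x 0 + coord x 4).
  exists (tperm (inord 4) (inord 5)); split; first by apply: block_tperm; lia.
  left; rewrite w5E.
  have Pw : P_IV (mkpt [:: 0; 0; 0; 0; 1; (0 : R)]).
    by rewrite -w5E; apply: permuteP; [apply: block_tperm; lia | exact: (proj1 vertex_v1)].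
  apply: (extract Vx Pw L5); first lra.
  rewrite /Ph !coordB !coordZ !coord_mkpt //=; lra.
have L6 : 0 < coord x 4 + coord x 5 - 1 by lra.
exists 1%g; split; first exact: block_perm1.
right; right; rewrite permute1.
apply: (extract Vx (proj1 vertex_v3) L6); first lra.
rewrite /Ph !coordB !coordZ /v3 !coord_mkpt //=; lra.
Qed.
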